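(* For every liner $X$ the following are equivalent: (1) $X$ is $0$-hypoparallel; (2) $X$ is $0$-parallel; (3) any two disjoint lines in $X$ are skew; (4) $X$ is projective; (5) $X$ is strongly regular; (6) $X$ is modular.
   Context: A liner is a set $X$ of points with a family of subsets called lines such that any two distinct points lie in a unique line and every line contains at least two points. For distinct $x,y$, $\overline{xy}$ is the line through them and $\overline{xx}:=\{x\}$. A set is flat if it contains $\overline{xy}$ for all its distinct points; $\overline A$ is the smallest flat containing $A$; the rank $\|A\|$ is the smallest cardinality of $B\subseteq X$ with $A\subseteq\overline B$; a plane is a flat of rank 3. For a cardinal $\kappa$, $X$ is $\kappa$-hypoparallel (resp. $\kappa$-parallel) if for every plane $P$, line $L\subseteq P$ and point $x\in P\setminus L$ there are at most (resp. exactly) $\kappa$ lines $\Lambda$ with $x\in\Lambda\subseteq P\setminus L$. Two lines $A,B$ are skew if $\|A\cup B\|=4$. $X$ is projective if for all $o,x,y\in X$, $p\in\overline{xy}$ and $v\in\overline{oy}\setminus\{p\}$ we have $\overline{vp}\cap\overline{ox}\neq\varnothing$. $X$ is strongly regular if for every nonempty flat $A$ and $b\in X\setminus A$, $\overline{A\cup\{b\}}=\bigcup_{a\in A}\overline{ab}$. $X$ is modular if $\|A\cap B\|+\|A\cup B\|=\|A\|+\|B\|$ for all flats $A,B$. *)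

(* Defs.v *)
From mathcomp Require Import all_boot.
From mathcomp Require Import boolp classical_sets.
From Stdlib Require List.
Set Implicit Arguments. Unset Strict Implicit. Unset Printing Implicit Defensive.
Local Open Scope classical_set_scope.

Section Liner.
Variables (X : Type) (lines : set (set X)).

Definition is_liner : Prop :=
  (forall x y : X, x <> y ->
     exists L, [/\ lines L, L x, L y &
       forall L', lines L' -> L' x -> L' y -> L' = L]) /\
  (forall L, lines L -> exists x y : X, [/\ x <> y, L x & L y]).

Definition lineth (x y : X) : set X :=
  [set z | (x = y /\ z = x) \/
           (x <> y /\ exists L, [/\ lines L, L x, L y & L z])].

Definition flat (A : set X) : Prop :=
  forall x y, A x -> A y -> x <> y -> lineth x y `<=` A.

Definition flat_hull (A : set X) : set X :=
  [set z | forall F, flat F -> A `<=` F -> F z].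

Definition spanned_by_n (A : set X) (n : nat) : Prop :=
  exists s : seq X, [/\ List.NoDup s, size s = n &
    A `<=` flat_hull [set x | List.In x s]].

(* rank: Some n if the smallest cardinality of a B with A ⊆ hull B is the
   finite number n, None if it is infinite. *)
Definition rank (A : set X) : option nat :=
  match pselect (exists n, spanned_by_n A n) with
  | left h => Some (ex_minn (P := fun n => `[< spanned_by_n A n >])
                      (let: ex_intro n hn := h in ex_intro _ n (asboolT hn)))
  | right _ => None
  end.

Definition plane (P : set X) : Prop := flat P /\ rank P = Some 3.

Definition parallels_through (P L : set X) (x : X) : set (set X) :=
  [set M | [/\ lines M, M x & M `<=` P `\` L]].

(* κ-hypoparallel / κ-parallel, for a finite cardinal κ *)
Definition hypoparallel (k : nat) : Prop :=
  forall P L x, plane P -> lines L -> L `<=` P -> P x -> ~ L x ->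
    exists s : seq (set X), [/\ List.NoDup s, size s <= k &
      forall M, parallels_through P L x M -> List.In M s].

Definition parallel (k : nat) : Prop :=
  forall P L x, plane P -> lines L -> L `<=` P -> P x -> ~ L x ->
    exists s : seq (set X), [/\ List.NoDup s, size s = k &
      forall M, parallels_through P L x M <-> List.In M s].

Definition skew (A B : set X) : Prop := rank (A `|` B) = Some 4.

Definition disjoint_lines_skew : Prop :=
  forall A B, lines A -> lines B -> A `&` B = set0 -> skew A B.

Definition projective : Prop :=
  forall o x y p v, lineth x y p -> lineth o y v -> v <> p ->
    lineth v p `&` lineth o x !=set0.

Definition strongly_regular : Prop :=
  forall A b, flat A -> A !=set0 -> ~ A b ->
    flat_hull (A `|` [set b]) = \bigcup_(a in A) lineth a b.

Definition radd (a b : option nat) : option nat :=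
  match a, b with Some m, Some n => Some (m + n) | _, _ => None end.

Definition modular : Prop :=
  forall A B, flat A -> flat B ->
    radd (rank (A `&` B)) (rank (A `|` B)) = radd (rank A) (rank B).

End Liner.

(* Main.v *)
Require Import Defs.
From mathcomp Require Import all_boot.
From mathcomp Require Import boolp classical_sets.
From mathcomp Require Import zify.
Set Implicit Arguments. Unset Strict Implicit. Unset Printing Implicit Defensive.
Local Open Scope classical_set_scope.


Section L.
Variables (X : Type) (lines : set (set X)).
Hypothesis HL : is_liner lines.
Local Notation hull := (flat_hull lines).
Local Notation lt := (lineth lines).
Definition lset (s : seq X) : set X := [set z | List.In z s].

Lemma line_ex x y : x <> y -> exists L, [/\ lines L, L x & L y].
Proof. by case: HL => H _ /H [L [? ? ? _]]; exists L. Qed.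

Lemma line_uniq L M x y : lines L -> lines M -> L x -> L y -> M x -> M y -> x <> y -> L = M.
Proof.
move=> lL lM Lx Ly Mx My xy; case: HL => H _; case: (H _ _ xy) => N [lN Nx Ny U].
by rewrite (U _ lL Lx Ly) (U _ lM Mx My).
Qed.

Lemma lt_l x y : lt x y x.
Proof.
have [->|xy] := pselect (x = y); first by left.
by right; split=> //; case: (line_ex xy) => L [? ? ?]; exists L.
Qed.

Lemma lt_r x y : lt x y y.
Proof.
have [->|xy] := pselect (x = y); first by left.
by right; split=> //; case: (line_ex xy) => L [? ? ?]; exists L.
Qed.

Lemma lt_line L x y z : lines L -> L x -> L y -> x <> y -> (lt x y z <-> L z).
Proof.
move=> lL Lx Ly xy; split.
  case=> [[//]|[_ [M [lM Mx My Mz]]]].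
  by rewrite (line_uniq lL lM Lx Ly Mx My xy).
by move=> Lz; right; split=> //; exists L.
Qed.

Lemma lt_sym x y z : lt x y z -> lt y x z.
Proof.
case=> [[-> ->]|[xy [L [? ? ? ?]]]]; first by left.
by right; split; [move=> e; apply: xy|exists L].
Qed.

Lemma hull_flat A : flat lines (hull A).
Proof. by move=> x y Ax Ay xy z xyz F fF AF; apply: (fF x y) => //; [apply: Ax|apply: Ay]. Qed.

Lemma hull_sub A : A `<=` hull A.
Proof. by move=> x Ax F _; apply. Qed.

Lemma hull_min A F : flat lines F -> A `<=` F -> hull A `<=` F.
Proof. by move=> fF AF x; apply. Qed.

Lemma hull_mono A B : A `<=` B -> hull A `<=` hull B.
Proof. move=> AB; apply: hull_min; first exact: hull_flat. by move=> x /AB; apply: hull_sub. Qed.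

Lemma hull_idem A B : A `<=` hull B -> hull A `<=` hull B.
Proof. by move=> AB; apply: hull_min => //; apply: hull_flat. Qed.

Lemma flat_line L : lines L -> flat lines L.
Proof. by move=> lL x y Lx Ly xy z /(lt_line z lL Lx Ly xy). Qed.

Lemma flat_lt x y : x <> y -> flat lines (lt x y).
Proof.
move=> xy; case: (line_ex xy) => L [lL Lx Ly] u v Hu Hv uv z Hz.
apply/(lt_line z lL Lx Ly xy).
have Lu : L u by exact/(lt_line _ lL Lx Ly xy).
have Lv : L v by exact/(lt_line _ lL Lx Ly xy).
exact: (flat_line lL Lu Lv uv Hz).
Qed.

Lemma flat_set1 b : flat lines [set b].
Proof. by move=> x y -> ->. Qed.

Lemma flat_set0 : flat lines set0.
Proof. by []. Qed.

Lemma flatI A B : flat lines A -> flat lines B -> flat lines (A `&` B).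
Proof. by move=> fA fB x y [Ax Bx] [Ay By] xy z H; split; [apply: (fA x y)|apply: (fB x y)]. Qed.

Lemma hull_set1 b : hull [set b] = [set b].
Proof. apply/seteqP; split; [apply: hull_min => //; apply: flat_set1|exact: hull_sub]. Qed.

Lemma hull_set0 : hull set0 = set0.
Proof. apply/seteqP; split; [apply: hull_min => //; apply: flat_set0|by []]. Qed.

Lemma lt_sub_flat F x y : flat lines F -> F x -> F y -> lt x y `<=` F.
Proof.
move=> fF Fx Fy z; have [->|xy] := pselect (x = y).
  by case=> [[_ ->]|[]].
exact: fF.
Qed.


Lemma rank_spec A : (exists n, spanned_by_n lines A n) ->
  exists n, [/\ rank lines A = Some n, spanned_by_n lines A n &
            forall m, spanned_by_n lines A m -> n <= m].
Proof.
move=> h0; rewrite /rank; case: pselect => [h|//].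
case: ex_minnP => m /asboolP Hm Hmin; exists m; split=> // k Hk.
by apply: Hmin; apply/asboolP.
Qed.

Lemma rank_eq A n : spanned_by_n lines A n -> (forall m, spanned_by_n lines A m -> n <= m) ->
  rank lines A = Some n.
Proof.
move=> Hn Hmin; case: (rank_spec (ex_intro _ n Hn)) => m [-> Hm Hm'].
by congr Some; apply/eqP; rewrite eqn_leq Hm' // Hmin.
Qed.

Lemma rank_Some A n : rank lines A = Some n -> spanned_by_n lines A n.
Proof.
rewrite /rank; case: pselect => [h|//] [<-].
by case: ex_minnP => m /asboolP.
Qed.

Lemma rank_le A n : spanned_by_n lines A n -> exists2 m, rank lines A = Some m & m <= n.
Proof. by move=> Hn; case: (rank_spec (ex_intro _ n Hn)) => m [-> _ H]; exists m => //; apply: H. Qed.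

Lemma rank_None A n : rank lines A = None -> ~ spanned_by_n lines A n.
Proof. by move=> H Hn; case: (rank_le Hn) => m; rewrite H. Qed.

Lemma spanned_sub A B n : A `<=` B -> spanned_by_n lines B n -> spanned_by_n lines A n.
Proof. by move=> AB [s [? ? H]]; exists s; split=> // x /AB /H. Qed.


Lemma ND2 (a b : X) : a <> b -> List.NoDup [:: a; b].
Proof.
move=> ab; constructor; first by case=> // e; apply: ab.
by constructor; [case|constructor].
Qed.

Lemma ND3 (a b c : X) : a <> b -> a <> c -> b <> c -> List.NoDup [:: a; b; c].
Proof.
move=> ab ac bc; constructor; last exact: ND2.
by case=> [e|[e|[]]]; [apply: ab|apply: ac].
Qed.

Lemma lset_sub s A : (forall z, List.In z s -> A z) -> lset s `<=` A.
Proof. by move=> H z; apply: H. Qed.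

Lemma tiny_hull t u v : size t <= 1 -> hull (lset t) u -> hull (lset t) v -> u = v.
Proof.
case: t => [|a [|b t]] // _.
  by move=> /(hull_min flat_set0 (lset_sub (A:=set0) (fun z (h : List.In z [::]) => h))).
have H : hull (lset [:: a]) `<=` [set a].
  by apply: hull_min; [exact: flat_set1|apply: lset_sub => z [->|[]]].
by move=> /H -> /H ->.
Qed.

Lemma small_hull t u v w : size t <= 2 -> List.NoDup t ->
  hull (lset t) u -> hull (lset t) v -> hull (lset t) w -> u <> v -> lt u v w.
Proof.
move=> st nd Hu Hv Hw uv.
case: (leqP (size t) 1) => [t1|t1]; first by case: uv; exact: tiny_hull Hu Hv.
case: t st nd t1 Hu Hv Hw => [|a [|b [|c t]]] // _ nd _.
have ab : a <> b by move: nd => /List.NoDup_cons_iff [H _] e; apply: H; left.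
case: (line_ex ab) => L [lL La Lb].
have H : hull (lset [:: a; b]) `<=` L.
  by apply: hull_min; [exact: flat_line|apply: lset_sub => z [<-|[<-|[]]]].
move=> /H Lu /H Lv /H Lw; exact/(lt_line _ lL Lu Lv uv).
Qed.

Lemma rank_set0 : rank lines set0 = Some 0.
Proof.
apply: rank_eq => // ; exists [::]; split=> //; constructor.
Qed.

Lemma rank_line L : lines L -> rank lines L = Some 2.
Proof.
move=> lL; case: HL => _ /(_ L lL) [x [y [xy Lx Ly]]].
apply: rank_eq.
  exists [:: x; y]; split=> //; first exact: ND2.
  move=> z Lz; have: lt x y z by exact/(lt_line _ lL Lx Ly xy).
  apply: lt_sub_flat; first exact: hull_flat.
    by apply: hull_sub; left.
  by apply: hull_sub; right; left.
move=> m [s [nd <- Hs]]; case: (leqP 2 (size s)) => // s1.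
by case: xy; apply: (tiny_hull s1); apply: Hs.
Qed.

Lemma i63 : modular lines -> disjoint_lines_skew lines.
Proof.
move=> M A B lA lB AB; have := M A B (flat_line lA) (flat_line lB).
rewrite AB rank_set0 (rank_line lA) (rank_line lB) /skew.
by case: (rank lines (A `|` B)) => //= n [->].
Qed.

Lemma i31 : disjoint_lines_skew lines -> hypoparallel lines 0.
Proof.
move=> D P L x [fP rP] lL LP Px nLx; exists [::]; split=> //; first constructor.
move=> M [lM Mx MPL]; exfalso.
have LM : L `&` M = set0.
  by apply/seteqP; split=> // z [Lz Mz]; case: (MPL z Mz).
have H := D L M lL lM LM; rewrite /skew in H.
have sp : spanned_by_n lines (L `|` M) 3.
  apply: spanned_sub (rank_Some rP) => z [/LP //|/MPL []//].
by case: (rank_le sp) => m; rewrite H => -[<-].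
Qed.

Lemma i12 : hypoparallel lines 0 -> parallel lines 0.
Proof.
move=> H P L x a b c d e; case: (H P L x a b c d e) => [[|? ?] [_ _ Hs]] //.
by exists [::]; split=> //; [constructor|move=> M; split=> [/Hs|]].
Qed.

Lemma i21 : parallel lines 0 -> hypoparallel lines 0.
Proof.
move=> H P L x a b c d e; case: (H P L x a b c d e) => [[|? ?] [nd _ Hs]] //.
by exists [::]; split=> // M /Hs.
Qed.

Lemma i14 : hypoparallel lines 0 -> projective lines.
Proof.
move=> HP o x y p v H1 H2 vp.
case: (pselect (lt v p `&` lt o x !=set0)) => // nI; exfalso.
have nIq : forall q, lt v p q -> lt o x q -> False by move=> q a b; apply: nI; exists q.
have nov : ~ lt o x v := nIq v (lt_l v p).
have nop : ~ lt o x p := nIq p (lt_r v p).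
case: (line_ex vp) => N [lN Nv Np].
have [ox|ox] := pselect (o = x).
  subst x; case: H2 => [[oy vo]|[oy [M [lM Mo My Mv]]]].
    by apply: nov; left.
  case: H1 => [[_ po]|[_ [M' [lM' M'o M'y M'p]]]].
    by apply: nop; left.
  have e1 := line_uniq lM lM' Mo My M'o M'y oy; subst M'.
  have e2 := line_uniq lN lM Nv Np Mv M'p vp; subst N.
  by apply: (nIq o); [exact/(lt_line _ lM Nv Np vp)|left].
case: (line_ex ox) => K [lK Ko Kx].
have ltK : forall z, lt o x z <-> K z by move=> z; exact: lt_line.
have ny : ~ lt o x y.
  move=> /ltK Ky; have [xy|xy] := pselect (x = y).
    by subst y; case: H1 => [[_ e]|[]] //; apply: nop; rewrite e; apply: lt_r.
  by apply: nop; apply/ltK; apply/(lt_line _ lK Kx Ky xy).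
have oy : o <> y by move=> e; apply: ny; rewrite -e; apply: lt_l.
have xy : x <> y by move=> e; apply: ny; rewrite -e; apply: lt_r.
pose P := hull (lset [:: o; x; y]).
have fP : flat lines P by apply: hull_flat.
have Po : P o by apply: hull_sub; left.
have Px : P x by apply: hull_sub; right; left.
have Py : P y by apply: hull_sub; right; right; left.
have rP : rank lines P = Some 3.
  apply: rank_eq; first by exists [:: o; x; y]; split=> //; exact: ND3.
  move=> m [s [nd <- Hs]]; case: (leqP 3 (size s)) => // s2.
  by case: ny; apply: (small_hull s2 nd (Hs _ Po) (Hs _ Px) (Hs _ Py)).
have KP : K `<=` P by move=> z /ltK; apply: lt_sub_flat.
have Pv : P v by move: H2; apply: lt_sub_flat.
have Pp : P p by move: H1; apply: lt_sub_flat.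
have nKv : ~ K v by move=> /ltK.
case: (HP P K v (conj fP rP) lK KP Pv nKv) => [[|? ?] [_ _ Hs]] //.
apply: (Hs N); split=> // z Nz; have vpz : lt v p z by exact/(lt_line _ lN Nv Np vp).
split; first by move: vpz; apply: lt_sub_flat.
by move=> /ltK; apply: nIq.
Qed.


Lemma lt_perm x y z : lt x y z -> x <> z -> lt x z y.
Proof. by case=> [[-> ->]//|[xy [L [lL Lx Ly Lz]]]] xz; right; split=> //; exists L. Qed.

Lemma lt_lineE x y z : lt x y z -> x <> y -> exists L, [/\ lines L, L x, L y & L z].
Proof. by case=> [[]//|[_ [L H]]] _; exists L. Qed.

Lemma i45 : projective lines -> strongly_regular lines.
Proof.
move=> Pr A b fA [a0 Aa0] nAb.
pose J := \bigcup_(a in A) lt a b.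
have nab : forall a, A a -> a <> b by move=> a Aa e; apply: nAb; rewrite -e.
have inJ : forall r L z, A r -> lines L -> L r -> L b -> L z -> J z.
  by move=> r L z Ar lL Lr Lb Lz; exists r => //; right; split; [apply: nab|exists L].
have JA : forall z, A z -> J z by move=> z Az; exists z => //; apply: lt_l.
have Jb : J b by exists a0 => //; apply: lt_r.
have S2 : forall x a2 w z, A x -> A a2 -> ~ A w -> w <> b -> lt a2 b w -> lt x w z -> z <> b -> J z.
  move=> x a2 w z Ax Aa2 nAw wb H2 H1 zb.
  have H2' : lt a2 w b by apply: lt_perm => // e; apply: nAw; rewrite -e.
  case: (Pr a2 x w z b H1 H2' (nesym zb)) => r [Hr1 Hr2].
  have Ar : A r by move: Hr2; apply: lt_sub_flat.
  case: (lt_lineE Hr1 (nesym zb)) => L [lL Lb Lz Lr].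
  exact: (inJ r L z Ar lL Lr Lb Lz).
apply/seteqP; split; last first.
  move=> z [a Aa Hz]; move: Hz; apply: lt_sub_flat; first exact: hull_flat.
    by apply: hull_sub; left.
  by apply: hull_sub; right.
apply: hull_min; last by move=> z [/JA|->].
move=> u w [a1 Aa1 Hu] [a2 Aa2 Hw] uw z Hz.
have [->|zb] := pselect (z = b); first exact: Jb.
have [Au|nAu] := pselect (A u); have [Aw|nAw] := pselect (A w).
- by apply: JA; move: Hz; apply: lt_sub_flat.
- have [wb|wb] := pselect (w = b).
    by subst w; exists u => //.
  exact: (S2 u a2 w z).
- have [ub|ub] := pselect (u = b).
    by subst u; exists w => //; apply: lt_sym.
  exact: (S2 w a1 u z Aw Aa1 nAu ub Hu (lt_sym Hz)).
have [ub|ub] := pselect (u = b).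
  subst u; case: (lt_lineE Hw (nab _ Aa2)) => L [lL La2 Lb Lw].
  case: (lt_lineE Hz uw) => M [lM Mb Mw Mz].
  have e := line_uniq lL lM Lb Lw Mb Mw uw; subst M.
  exact: (inJ a2 L z Aa2 lL La2 Lb Mz).
have [wb|wb] := pselect (w = b).
  subst w; case: (lt_lineE Hu (nab _ Aa1)) => L [lL La1 Lb Lu].
  case: (lt_lineE Hz uw) => M [lM Mu Mb Mz].
  have e := line_uniq lL lM Lu Lb Mu Mb uw; subst M.
  exact: (inJ a1 L z Aa1 lL La1 Lb Mz).
have a1u : a1 <> u by move=> e; apply: nAu; rewrite -e.
have a1w : a1 <> w by move=> e; apply: nAw; rewrite -e.
have H2 : lt a1 u b by apply: lt_perm.
case: (Pr a1 w u z b (lt_sym Hz) H2 (nesym zb)) => q [Hq1 Hq2].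
have [qb|qb] := pselect (q = b).
  subst q; case: (lt_lineE Hq2 a1w) => L1 [lL1 L1a1 L1w L1b].
  case: (lt_lineE Hu (nab _ Aa1)) => L2 [lL2 L2a1 L2b L2u].
  have e := line_uniq lL1 lL2 L1a1 L1b L2a1 L2b (nab _ Aa1); subst L2.
  case: (lt_lineE Hz uw) => L3 [lL3 L3u L3w L3z].
  have e := line_uniq lL1 lL3 L2u L1w L3u L3w uw; subst L3.
  exact: (inJ a1 L1 z Aa1 lL1 L1a1 L1b L3z).
have [r Ar Hr] := S2 a1 a2 w q Aa1 Aa2 nAw wb Hw Hq2 qb.
case: (lt_lineE Hr (nab _ Ar)) => M [lM Mr Mb Mq].
case: (lt_lineE Hq1 (nesym zb)) => N [lN Nb Nz Nq].
have e := line_uniq lM lN Mb Mq Nb Nq (nesym qb); subst N.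
exact: (inJ r M z Ar lM Mr Mb Nz).
Qed.


Fixpoint indep (P : set X) (s : seq X) : Prop :=
  if s is x :: s' then ~ hull P x /\ indep (P `|` [set x]) s' else True.

Lemma hull_empty_add G x : (forall z, ~ G z) -> hull (G `|` [set x]) `<=` [set x].
Proof. by move=> nG; apply: hull_min; [exact: flat_set1|move=> z [/nG|]]. Qed.

Lemma exchange (SR : strongly_regular lines) Q b c :
  hull (Q `|` [set b]) c -> ~ hull Q c -> hull (Q `|` [set c]) b.
Proof.
move=> Hc nc; pose G := hull Q.
have sub : hull (Q `|` [set b]) `<=` hull (G `|` [set b]).
  by apply: hull_mono => z [Qz|->]; [left; apply: hull_sub|right].
move/sub: Hc => Hc.
have [[g0 Gg0]|nG] := pselect (exists g, G g); last first.
  have /= -> := @hull_empty_add G b (fun z Gz => nG (ex_intro _ z Gz)) c Hc.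
  by apply: hull_sub; right.
have [Gb|nGb] := pselect (G b).
  by case: nc; move: Hc; apply: hull_min; [exact: hull_flat|move=> z [//|->]].
rewrite (SR G b (@hull_flat Q) (ex_intro _ g0 Gg0) nGb) in Hc.
case: Hc => g Gg Hg.
have gb : g <> b by move=> e; apply: nGb; rewrite -e.
have gc : g <> c by move=> e; apply: nc; rewrite -e.
have : lt g c b by apply: lt_perm.
apply: lt_sub_flat; first exact: hull_flat.
  by move: Gg; apply: hull_mono => z Qz; left.
by apply: hull_sub; right.
Qed.

Lemma lset_cons y t z : lset (y :: t) z <-> y = z \/ lset t z.
Proof. by []. Qed.

Lemma exch_list (SR : strongly_regular lines) x t : forall P,
  hull (P `|` lset t) x -> ~ hull P x ->
  exists t', (size t' < size t)%N /\ hull (P `|` lset t) `<=` hull ((P `|` [set x]) `|` lset t').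
Proof.
elim: t => [|y t0 IH] P Hx nx.
  by case: nx; move: Hx; apply: hull_mono => z [//|[]].
have [Hy|nHy] := pselect (hull (P `|` [set y]) x).
  have Ey := exchange SR Hy nx.
  exists t0; split=> //; apply: hull_idem => z [Pz|[<-|tz]].
  - by apply: hull_sub; left; left.
  - by move: Ey; apply: hull_mono => w [Pw|->]; left; [left|right].
  - by apply: hull_sub; right.
have Hx' : hull ((P `|` [set y]) `|` lset t0) x.
  by move: Hx; apply: hull_mono => z [Pz|[<-|tz]]; [left; left|left; right|right].
case: (IH _ Hx' nHy) => t' [st' Ht'].
exists (y :: t'); split=> //.
apply: (subset_trans _ (subset_trans Ht' _)).
  by apply: hull_mono => z [Pz|[<-|tz]]; [left; left|left; right|right].
by apply: hull_mono => z [[[Pz|<-]|->]|tz]; [left; left|right; left|left; right|right; right].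
Qed.

Lemma steinitz (SR : strongly_regular lines) s : forall P t,
  indep P s -> lset s `<=` hull (P `|` lset t) -> (size s <= size t)%N.
Proof.
elim: s => [//|x s IH] P t [nx ind] H.
have Hx : hull (P `|` lset t) x by apply: H; left.
case: (exch_list SR Hx nx) => t' [st' Ht'].
have := IH _ t' ind (fun z sz => Ht' _ (H z (or_intror sz))).
by move=> h; apply: leq_ltn_trans st'.
Qed.

Lemma indep_ND s : forall P, indep P s -> List.NoDup s /\ (forall z, List.In z s -> ~ P z).
Proof.
elim: s => [|x s IH] P; first by split=> //; constructor.
move=> [nx /IH [nd nP]]; split.
  by constructor=> // /nP; apply; right.
move=> z [<-|sz]; first by move=> Px; apply: nx; apply: hull_sub.
by move=> Pz; apply: (nP z sz); left.
Qed.

Lemma lset_cat s1 s2 z : lset (s1 ++ s2) z <-> lset s1 z \/ lset s2 z.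
Proof. exact: List.in_app_iff. Qed.

Lemma indep_cat s1 s2 : forall P, indep P (s1 ++ s2) <-> indep P s1 /\ indep (P `|` lset s1) s2.
Proof.
elim: s1 => [|x s1 IH] P /=.
  have -> : P `|` lset [::] = P by apply/seteqP; split=> [z [//|[]]|z Pz]; left.
  by split=> [h|[]].
rewrite IH.
have -> : P `|` [set x] `|` lset s1 = P `|` lset (x :: s1).
  by apply/seteqP; split=> z; [case=> [[Pz|<-]|sz]; [left|right; left|right; right]
                              |case=> [Pz|[<-|sz]]; [left; left|left; right|right]].
tauto.
Qed.

Lemma extend (SR : strongly_regular lines) F t : flat lines F -> F `<=` hull (lset t) ->
  forall c, indep set0 c -> lset c `<=` F ->
  exists a, [/\ indep set0 (c ++ a), lset (c ++ a) `<=` F & F `<=` hull (lset (c ++ a))].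
Proof.
move=> fF Ft c; move: {2}(size t - size c) (leqnn (size t - size c)) => k.
elim: k c => [|k IH] c Hk ic cF.
all: have [Fc|nFc] := pselect (F `<=` hull (lset c)); first by exists [::]; rewrite cats0.
all: have [x [Fx nx]] : exists x, F x /\ ~ hull (lset c) x by
       apply: contrapT => nE; apply: nFc => z Fz; apply: contrapT => nz; apply: nE; exists z.
all: have ic' : indep set0 (c ++ [:: x]) by
       apply/indep_cat; split=> //=; split=> //; rewrite set0U.
all: have cF' : lset (c ++ [:: x]) `<=` F by move=> z /lset_cat [/cF|[<-|[]]].
all: have := steinitz SR ic' (t:=t); rewrite set0U size_cat /= addn1 => /(_ (subset_trans cF' Ft)) st.
  by exfalso; lia.
have Hk' : (size t - size (c ++ [:: x]) <= k)%N by rewrite size_cat /=; lia.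
case: (IH _ Hk' ic' cF') => a; rewrite -catA /= => H; by exists (x :: a).
Qed.


Lemma indep_transfer (SR : strongly_regular lines) B : flat lines B ->
  forall b PA PB, (forall z, hull PA z -> B z -> hull PB z) ->
  (forall z, List.In z b -> B z) -> indep PB b -> indep PA b.
Proof.
move=> fB; elim=> [//|x b IH] PA PB HAB Hb [nx ind].
have Bx : B x by apply: Hb; left.
have nAx : ~ hull PA x by move=> h; apply: nx; apply: HAB.
split=> //; apply: (IH _ (PB `|` [set x])) => //; last by move=> z bz; apply: Hb; right.
move=> z Hz Bz; pose G := hull PA.
have sub : hull (PA `|` [set x]) `<=` hull (G `|` [set x]).
  by apply: hull_mono => w [Pw|->]; [left; apply: hull_sub|right].
move/sub: Hz => Hz.
have [[g0 Gg0]|nG] := pselect (exists g, G g); last first.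
  have /= -> := @hull_empty_add G x (fun w Gw => nG (ex_intro _ w Gw)) z Hz.
  by apply: hull_sub; right.
rewrite (SR G x (@hull_flat PA) (ex_intro _ g0 Gg0) nAx) in Hz.
case: Hz => g Gg Hg.
have gx : g <> x by move=> e; apply: nAx; rewrite -e.
have hPBx : forall w, hull PB w -> hull (PB `|` [set x]) w by apply: hull_mono => w Pw; left.
have [gz|gz] := pselect (g = z); first by subst g; apply: hPBx; apply: HAB.
have [zx|zx] := pselect (z = x); first by rewrite zx; apply: hull_sub; right.
have Bg : B g.
  have : lt z x g by apply: lt_sym; apply: lt_perm; [apply: lt_sym|apply: nesym].
  by apply: lt_sub_flat.
move: Hg; apply: lt_sub_flat; first exact: hull_flat.
  by apply: hPBx; apply: HAB.
by apply: hull_sub; right.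
Qed.

Lemma rank_indep (SR : strongly_regular lines) s S : indep set0 s ->
  S `<=` hull (lset s) -> lset s `<=` S -> rank lines S = Some (size s).
Proof.
move=> ins Ss sS; apply: rank_eq.
  by exists s; split=> //; case: (indep_ND ins).
move=> m [t [nd <- Ht]]; apply: (steinitz SR ins); rewrite set0U.
exact: subset_trans sS Ht.
Qed.

Lemma i56 : strongly_regular lines -> modular lines.
Proof.
move=> SR A B fA fB.
have noneU : forall C D, rank lines C = None -> C `<=` D -> rank lines D = None.
  move=> C D eC CD; case eD: (rank lines D) => [n|] //; exfalso.
  exact: (rank_None eC (spanned_sub CD (rank_Some eD))).
case eA: (rank lines A) => [nA|]; last first.
  by rewrite (noneU _ _ eA (fun z (h : A z) => or_introl h)); case: (rank lines (A `&` B)).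
case eB: (rank lines B) => [nB|]; last first.
  by rewrite (noneU _ _ eB (fun z (h : B z) => or_intror h)); case: (rank lines (A `&` B)).
case: (rank_Some eA) => tA [_ _ HA]; case: (rank_Some eB) => tB [_ _ HB].
have fAB := flatI fA fB.
case: (extend SR fAB (subset_trans (@subIsetl _ A B) HA) (c:=[::]) I (fun z (h : List.In z [::]) => match h with end))
  => c; rewrite cat0s => -[ic cAB ABc].
have cA : lset c `<=` A by move=> z /cAB [].
have cB : lset c `<=` B by move=> z /cAB [].
case: (extend SR fA HA ic cA) => a [ia aA Aa].
case: (extend SR fB HB ic cB) => b [ib bB Bb].
have iab : indep set0 (c ++ a ++ b).
  rewrite catA; apply/indep_cat; split=> //.
  move/indep_cat: ib => [_]; apply: (indep_transfer SR fB).
    move=> z Hz Bz; apply: hull_mono (ABc _ _); first by move=> w ?; right.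
    split=> //; move: Hz; apply: hull_min => // w [//|/aA //].
  by move=> z zb; apply: bB; apply/lset_cat; right.
have := rank_indep SR ia Aa aA; rewrite eA => -[->].
have := rank_indep SR ib Bb bB; rewrite eB => -[->].
rewrite (rank_indep SR ic ABc cAB).
rewrite (rank_indep SR iab (s := c ++ a ++ b) (S := A `|` B)) /=.
- by rewrite !size_cat; congr Some; lia.
- move=> z [/Aa|/Bb]; apply: hull_mono => w /lset_cat [wc|wx]; apply/lset_cat; try by left.
    by right; apply/lset_cat; left.
  by right; apply/lset_cat; right.
move=> z /lset_cat [zc|/lset_cat [za|zb]].
- by left; apply: aA; apply/lset_cat; left.
- by left; apply: aA; apply/lset_cat; right.
- by right; apply: bB; apply/lset_cat; right.
Qed.

End L.

Theorem theorem3p4p1 (X : Type) (lines : set (set X)) :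
  is_liner lines ->
  [<-> hypoparallel lines 0;
       parallel lines 0;
       disjoint_lines_skew lines;
       projective lines;
       strongly_regular lines;
       modular lines].
Proof.
move=> HL; tfae.
- exact: i12.
- by move=> h; apply: (i63 HL); apply: i56; apply: (i45 HL); apply: (i14 HL); apply: i21.
- by move=> h; apply: (i14 HL); apply: i31.
- exact: (i45 HL).
- exact: i56.
- by move=> h; apply: i31; apply: (i63 HL).
Qed.
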